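(* Let $\Delta\ge 4$ be an integer, put $t=\left\lfloor\frac{\Delta+3}{2}\right\rfloor$, and for positive integers $i,j$ define \[ F(i,j)=(4\Delta-6)\Bigl(\frac{1}{i}+\frac{1}{j}\Bigr)+\Delta^2-6\Delta+3+\frac{6}{\Delta}-(i-j)^2 . \] Then for all integers $1\le p\le q\le t$ we have $F(p,q)\ge F(3,\Delta)$. *)

(* Defs.v *)
From mathcomp Require Import all_boot all_order all_algebra.
Set Implicit Arguments. Unset Strict Implicit. Unset Printing Implicit Defensive.
Import Order.TTheory GRing.Theory Num.Theory.
Local Open Scope ring_scope.

Definition F (D i j : nat) : rat :=
  (4 * D%:R - 6) * ((i%:R)^-1 + (j%:R)^-1) + (D%:R) ^+ 2 - 6 * D%:R + 3
  + 6 / D%:R - (i%:R - j%:R) ^+ 2.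

Definition tD (D : nat) : nat := (D + 3) %/ 2.

(* Main.v *)
Require Import Defs.
From mathcomp Require Import all_boot all_order all_algebra.
From mathcomp Require Import zify ring lra.
Import Order.TTheory GRing.Theory Num.Theory.
Local Open Scope ring_scope.

Lemma small : all (fun D => all (fun p => all (fun q => (p<=q)%N ==> (q<=tD D)%N ==> (F D 3 D <= F D p q)) (iota 1 5)) (iota 1 5)) (iota 4 5).
Proof. by vm_compute. Qed.

Theorem lemma4p5 (D : nat) (hD : (4 <= D)%N) (p q : nat)
  (hp : (1 <= p)%N) (hpq : (p <= q)%N) (hqt : (q <= tD D)%N) :
  F D 3 D <= F D p q.
Proof.
have ht : (2 * q <= D + 3)%N by move: hqt; rewrite /tD; lia.
case: (leqP D 8) => hD8.
  have /allP := small => /(_ D); rewrite mem_iota.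
  have -> : (4 <= D < 4 + 5)%N by lia.
  move=> /(_ isT) /allP /(_ p); rewrite mem_iota.
  have -> : (1 <= p < 1 + 5)%N by lia.
  move=> /(_ isT) /allP /(_ q); rewrite mem_iota.
  have -> : (1 <= q < 1 + 5)%N by lia.
  by move=> /(_ isT); rewrite hpq hqt.
set d : rat := D%:R. set P : rat := p%:R. set Q : rat := q%:R.
set x := P^-1. set y := Q^-1. set di := d^-1.
have hd : 9 <= d by rewrite /d (ler_nat rat 9 D).
have hP1 : 1 <= P by rewrite /P (ler_nat rat 1 p).
have hPQ : P <= Q by rewrite /P /Q ler_nat.
have hQ : 2 * Q <= d + 3.
  by rewrite /Q /d -(natrD rat D 3) -(natrM rat 2 q) ler_nat.
have hdi : d * di = 1 by rewrite /di mulfV // gt_eqF // (lt_le_trans _ hd).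
have hdi0 : 0 <= di by rewrite /di invr_ge0 (le_trans _ hd).
have hx0 : 0 <= x by rewrite /x invr_ge0 (le_trans _ hP1).
have hy0 : 0 <= y by rewrite /y invr_ge0 (le_trans _ (le_trans hP1 hPQ)).
rewrite -subr_ge0.
have -> : F D p q - F D 3 D = (4*d-6)*(x+y) - (P-Q)^+2 - (4*d-6)*(3^-1+di) + (3-d)^+2.
  rewrite /F /x /y /di /d /P /Q. rewrite (_ : (3%:R : rat) = 3) //. ring.
have hdi' : (4*d-6)*di = 4 - 6*di by rewrite mulrBl -mulrA hdi mulr1.
case: (leqP p 3) => hp3.
  have hP3 : P <= 3 by rewrite /P (ler_nat rat p 3).
  have hx : 3^-1 <= x by rewrite /x lef_pV2 ?posrE // (lt_le_trans _ hP1).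
  have hy : di <= y.
    rewrite /y /di lef_pV2 ?posrE ?(lt_le_trans _ hd) ?(lt_le_trans _ (le_trans hP1 hPQ)) //.
    lra.
  nra.
have hP4 : 4 <= P by rewrite /P (ler_nat rat 4 p).
nra.
Qed.
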